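(* Let $R$ be an associative unital division ring over a field $F$ of characteristic $0$ with a derivation $'$ (vanishing on $F$), let $\lambda\in F$, and let $\theta_n\in R$ be invertible for all $n\in\mathbb{Z}$. Define $$\mathcal{L}_n=\begin{pmatrix}\lambda-\theta_n'\theta_n^{-1} & -\theta_n\\ \theta_n^{-1} & 0\end{pmatrix},\qquad \mathcal{M}_n=\begin{pmatrix}0 & -\theta_n\\ \theta_{n-1}^{-1} & -\lambda\end{pmatrix}.$$ If $(\theta_n'\theta_n^{-1})'=\theta_{n+1}\theta_n^{-1}-\theta_n\theta_{n-1}^{-1}$ for all $n$, then $\mathcal{L}_n'=\mathcal{M}_{n+1}\mathcal{L}_n-\mathcal{L}_n\mathcal{M}_n$ for all $n$, where $'$ acts entrywise. *)

(* Defs.v *)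
From HB Require Import structures.
From mathcomp Require Import all_boot all_order all_algebra.
Set Implicit Arguments. Unset Strict Implicit. Unset Printing Implicit Defensive.
Import Order.TTheory GRing.Theory Num.Theory.
Local Open Scope ring_scope.

Definition mx2 (R : pzRingType) (a b c d : R) : 'M[R]_2 :=
  \matrix_(i < 2, j < 2)
    if i == 0 :> nat then (if j == 0 :> nat then a else b)
    else (if j == 0 :> nat then c else d).

Definition is_derivation (F : fieldType) (R : unitAlgType F) (D : R -> R) :=
  [/\ forall x y, D (x + y) = D x + D y,
      forall x y, D (x * y) = D x * y + x * D y
    & forall k : F, D (k%:A) = 0].

Definition Lmx (F : fieldType) (R : unitAlgType F) (D : R -> R)
  (lam : F) (theta : int -> R) (n : int) : 'M[R]_2 :=
  mx2 (lam%:A - D (theta n) * (theta n)^-1) (- theta n) ((theta n)^-1) 0.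

Definition Mmx (F : fieldType) (R : unitAlgType F)
  (lam : F) (theta : int -> R) (n : int) : 'M[R]_2 :=
  mx2 0 (- theta n) ((theta (n - 1))^-1) (- lam%:A).

(* Main.v *)
Require Import Defs.
From HB Require Import structures.
From mathcomp Require Import all_boot all_order all_algebra.
Import Order.TTheory GRing.Theory Num.Theory.
Local Open Scope ring_scope.

Theorem proposition4p8 (F : fieldType) (R : unitAlgType F) (D : R -> R)
  (lam : F) (theta : int -> R) :
  [pchar F] =i pred0 ->
  (forall x : R, x != 0 -> x \is a GRing.unit) ->
  is_derivation D ->
  (forall n, theta n \is a GRing.unit) ->
  (forall n : int, D (D (theta n) * (theta n)^-1)
     = theta (n + 1) * (theta n)^-1 - theta n * (theta (n - 1))^-1) ->
  forall n : int,
    map_mx D (Lmx D lam theta n)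
    = Mmx lam theta (n + 1) *m Lmx D lam theta n - Lmx D lam theta n *m Mmx lam theta n.
Proof.
move=> _ _ [DD DM DA] U H n.
have D0 : D 0 = 0.
  have E := DD 0 0; rewrite addr0 in E; apply: (addrI (D 0)); by rewrite addr0 -E.
have DN : forall x, D (- x) = - D x.
  by move=> x; apply/eqP; rewrite -subr_eq0 opprK -DD addrC subrr D0.
have D1 : D 1 = 0 by rewrite -(scale1r (1 : R)) DA.
set t := theta n.
have Dinv : D t^-1 = - (t^-1 * (D t * t^-1)).
  have := DM t t^-1; rewrite mulrV ?U // D1 => /eqP; rewrite eq_sym addrC addr_eq0 => /eqP E.
  by rewrite -[D t^-1](mulKr (U n)) E mulrN.
have Hl : forall x : R, lam%:A * x = x * lam%:A.
  by move=> x; rewrite -scalerAl mul1r -scalerAr mulr1.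
apply/matrixP => i j; rewrite !mxE !big_ord_recr !big_ord0 /= !mxE /=.
case: i => [[|[|//]] ?]; case: j => [[|[|//]] ?] /=; rewrite ?mxE /=.
all: rewrite ?DD ?DA ?DN ?H ?Dinv ?D0 -/t /=; rewrite !(mulr0, mul0r, addr0, add0r, subr0, sub0r).
all: rewrite ?addrK -/t.
- by rewrite !mulNr opprK opprB addrC.
- by rewrite !(mulrN, mulNr, opprK) mulrBl -Hl divrK ?U // opprB subrK.
- by rewrite mulrBr mulNr Hl addrC addKr.
- by rewrite subrr.
Qed.
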